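(* The left Kan extension $\mathrm{Lan}_{\blacktriangle} \colon \widehat{\Delta} \to \widehat{\overline{\square}}_\vee$ preserves monomorphisms.
   Context: $\mathbf{SLat}$ is the category of (join-)semilattices (sets with an associative, commutative, idempotent binary operation $\vee$) and $\vee$-preserving maps. $\overline{\square}_\vee$ is the full subcategory of $\mathbf{SLat}$ on finite inhabited semilattices whose induced order ($x\le y\iff x\vee y=y$) is a distributive lattice. $\Delta$ is the simplex category of finite nonempty linear orders $[n]$ and monotone maps, and $\blacktriangle\colon \Delta\hookrightarrow\overline{\square}_\vee$ regards $[n]$ as a semilattice with $\vee=\max$. $\widehat{\mathcal C}$ denotes the category of presheaves on $\mathcal C$, and $\mathrm{Lan}_\blacktriangle$ is the left adjoint of restriction along $\blacktriangle$. *)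

(* Defs.v *)
From Stdlib Require Import Relations FunctionalExtensionality PropExtensionality ProofIrrelevance.
From mathcomp Require Import all_boot.

Set Implicit Arguments.
Unset Strict Implicit.
Unset Printing Implicit Defensive.

(* A (concrete) category: objects, hom-types, identities, composition
   (comp g f = g o f).  The category laws hold for the concrete instances
   below; they are not needed to state the definitions. *)
Record cat := Cat {
  ob :> Type;
  hom : ob -> ob -> Type;
  idm : forall a, hom a a;
  comp : forall a b c, hom b c -> hom a b -> hom a c
}.
Arguments idm {C} a : rename.
Arguments comp {C a b c} _ _ : rename.

Record psh (C : cat) := Psh {
  sec :> C -> Type;
  act : forall a b : C, hom a b -> sec b -> sec a;
  act_id : forall (a : C) (x : sec a), act (idm a) x = x;
  act_comp : forall (a b c : C) (f : hom a b) (g : hom b c) (x : sec c),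
      act (comp g f) x = act f (act g x)
}.
Arguments act {C} p {a b} f x.

Unset Implicit Arguments.
Record nat_tr (C : cat) (X Y : psh C) := NatTr {
  cmp :> forall a : C, X a -> Y a;
  natural : forall (a b : C) (f : hom a b) (x : X b),
      cmp a (act X f x) = act Y f (cmp b x)
}.
Arguments NatTr {C X Y} cmp natural.
Arguments nat_tr {C} X Y.
Arguments cmp {C X Y} n a x.
Arguments natural {C X Y} n {a b} f x.
Set Implicit Arguments.

(* Monomorphism in the presheaf category: left-cancellable natural
   transformation (equality of natural transformations = equality of all
   components). *)
Definition is_mono (C : cat) (X Y : psh C) (f : nat_tr X Y) : Prop :=
  forall (Z : psh C) (g h : nat_tr Z X),
    (forall (a : C) (z : Z a), f a (g a z) = f a (h a z)) ->
    forall (a : C) (z : Z a), g a z = h a z.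

(* The simplex category Delta: objects n represent [n] = {0 < ... < n} *)

Definition dhom (m n : nat) :=
  {f : 'I_m.+1 -> 'I_n.+1 | forall i j : 'I_m.+1, (i <= j)%N -> (f i <= f j)%N}.

Definition did (n : nat) : dhom n n := exist (fun f : 'I_n.+1 -> 'I_n.+1 => forall i j : 'I_n.+1, (i <= j)%N -> (f i <= f j)%N) id (fun i j h => h).

Definition dcomp (a b c : nat) (g : dhom b c) (f : dhom a b) : dhom a c.
Proof.
exists (fun i => sval g (sval f i)).
by move=> i j h; apply: (proj2_sig g); apply: (proj2_sig f).
Defined.

Definition Delta : cat := @Cat nat dhom did dcomp.

(* The category of finite inhabited join-semilattices whose induced     *)
(* order (x <= y iff x \/ y = y) is a distributive lattice             *)

Record DSLat := DSLatMk {
  car :> finType;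
  join : car -> car -> car;
  joinA : forall x y z, join x (join y z) = join (join x y) z;
  joinC : forall x y, join x y = join y x;
  joinxx : forall x, join x x = x;
  inhab : (0 < #|car|)%N;
  distr_lattice : exists meet : car -> car -> car,
      (forall x y z, join z (meet x y) = meet x y <->
                     (join z x = x /\ join z y = y)) /\
      (forall x y z, meet x (join y z) = join (meet x y) (meet x z))
}.

Definition shom (A B : DSLat) :=
  {f : A -> B | forall x y, f (join x y) = join (f x) (f y)}.

Definition sid (A : DSLat) : shom A A := exist (fun f : A -> A => forall x y, f (join x y) = join (f x) (f y)) id (fun x y => erefl).

Definition scomp (A B C : DSLat) (g : shom B C) (f : shom A B) : shom A C.
Proof.
exists (fun x => sval g (sval f x)).
by move=> x y; rewrite (proj2_sig f) (proj2_sig g).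
Defined.

Definition Box : cat := @Cat DSLat shom sid scomp.

Lemma shom_eq (A B : DSLat) (f g : shom A B) :
  (forall x, sval f x = sval g x) -> f = g.
Proof.
case: f g => f Hf [g Hg] /= H.
have E := functional_extensionality _ _ H; subst g.
by rewrite (proof_irrelevance _ Hf Hg).
Qed.

(* The inclusion  tri : Delta -> Box,  [n] with join = max             *)

Definition joinI (n : nat) (i j : 'I_n.+1) : 'I_n.+1 := if (i <= j)%N then j else i.
Definition meetI (n : nat) (i j : 'I_n.+1) : 'I_n.+1 := if (i <= j)%N then i else j.

Lemma joinI_val n (i j : 'I_n.+1) : nat_of_ord (joinI i j) = maxn i j.
Proof.
by rewrite /joinI; case: leqP.
Qed.

Lemma meetI_val n (i j : 'I_n.+1) : nat_of_ord (meetI i j) = minn i j.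
Proof.
by rewrite /meetI; case: leqP.
Qed.

Lemma joinI_le n (i j : 'I_n.+1) : joinI i j = j <-> (i <= j)%N.
Proof.
split; first by move/(congr1 (@nat_of_ord _)); rewrite joinI_val => /maxn_idPr.
by move=> h; apply: val_inj; rewrite /= joinI_val; apply/maxn_idPr.
Qed.

Definition tri (n : nat) : DSLat.
Proof.
refine (@DSLatMk ('I_n.+1 : finType) (@joinI n) _ _ _ _ _).
- by move=> x y z; apply: val_inj; rewrite /= !joinI_val maxnA.
- by move=> x y; apply: val_inj; rewrite /= !joinI_val maxnC.
- by move=> x; apply: val_inj; rewrite /= !joinI_val maxnn.
- by rewrite card_ord.
- exists (@meetI n); split.
  + move=> x y z; rewrite !joinI_le meetI_val leq_min.
    by split; [move/andP | move=> [-> ->]].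
  + move=> x y z; apply: val_inj; rewrite /= !(joinI_val, meetI_val).
    by rewrite minn_maxr.
Defined.

Definition trimor (m n : nat) (t : dhom m n) : shom (tri m) (tri n).
Proof.
exists (sval t) => /= x y; apply: val_inj; rewrite /= !joinI_val.
have mono := proj2_sig t; rewrite /joinI.
case: leqP => h.
  by rewrite (maxn_idPr (mono _ _ h)).
by rewrite (maxn_idPl (mono _ _ (ltnW h))).
Defined.

Section Quot.
Variables (T : Type) (R : T -> T -> Prop).
Definition quot := {P : T -> Prop | exists p, P = R p}.
Definition cls (p : T) : quot := exist _ (R p) (ex_intro _ p erefl).
End Quot.

Section QMap.
Variables (T T' : Type) (R : T -> T -> Prop) (R' : T' -> T' -> Prop).
Hypothesis ReqR : equivalence _ R.
Hypothesis ReqR' : equivalence _ R'.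
Variable phi : T -> T'.
Hypothesis Hphi : forall p q, R p q -> R' (phi p) (phi q).

Let tr' : forall x y z, R' x y -> R' y z -> R' x z := Relation_Definitions.equiv_trans _ _ ReqR'.
Let sy' : forall x y, R' x y -> R' y x := Relation_Definitions.equiv_sym _ _ ReqR'.
Let rf : forall x, R x x := Relation_Definitions.equiv_refl _ _ ReqR.
Let rf' : forall x, R' x x := Relation_Definitions.equiv_refl _ _ ReqR'.

Lemma qmap_class (p0 : T) :
  (fun q => exists p, R p0 p /\ R' q (phi p)) = R' (phi p0).
Proof.
apply: functional_extensionality => q; apply: propositional_extensionality.
split.
- case=> p [H1 H2]; apply: tr' (Hphi H1) _; exact: sy'.
- move=> H; exists p0; split; [exact: rf | exact: sy'].
Qed.

Definition qmap (P : quot R) : quot R'.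
Proof.
exists (fun q => exists p, sval P p /\ R' q (phi p)).
case: P => P [p0 e] /=; exists (phi p0); subst P; exact: qmap_class.
Defined.

Lemma qmap_cls p : qmap (cls R p) = cls R' (phi p).
Proof.
apply: eq_sig_hprop => [P|]; first by move=> *; apply: proof_irrelevance.
exact: qmap_class.
Qed.
End QMap.

Lemma quot_cls (T : Type) (R : T -> T -> Prop) (P : quot R) : exists p, P = cls R p.
Proof.
case: P => P [p e]; exists p; subst P.
by apply: eq_sig_hprop => [Q|]; first by move=> *; apply: proof_irrelevance.
Qed.

(* Left Kan extension along tri, by the (pointwise) coend formula       *)
(*   (Lan X)(A) = ( Sum_n  Box(A, tri n) x X_n ) / ~                    *)
(* where ~ is the equivalence relation generated by                     *)
(*   (tri(theta) o g, x) ~ (g, X(theta) x)                              *)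
(* for g : A -> tri m, theta : [m] -> [n] in Delta, x in X_n.           *)

Section Lan.
Variable X : psh Delta.

Definition lanT (A : DSLat) := {n : nat & (shom A (tri n) * X n)%type}.

Definition lan_step (A : DSLat) (p q : lanT A) : Prop :=
  exists (m n : nat) (g : shom A (tri m)) (t : dhom m n) (x : X n),
    p = existT _ n (scomp (trimor t) g, x) /\
    q = existT _ m (g, act X (t : @hom Delta m n) x).

Definition lan_rel (A : DSLat) := clos_refl_sym_trans _ (@lan_step A).

Lemma lan_rel_equiv A : equivalence _ (@lan_rel A).
Proof. exact: clos_rst_is_equiv. Qed.

Definition lan_pre (A B : DSLat) (h : shom B A) (p : lanT A) : lanT B :=
  existT _ (projT1 p) (scomp (projT2 p).1 h, (projT2 p).2).

Lemma lan_pre_rel A B (h : shom B A) p q :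
  lan_rel p q -> lan_rel (lan_pre h p) (lan_pre h q).
Proof.
elim=> {p q} [p q [m [n [g [t [x [-> ->]]]]]] | p | p q _ IH | p q r _ IH1 _ IH2].
- apply: rst_step; exists m, n, (scomp g h), t, x; split=> //.
  by rewrite /lan_pre /=; congr existT; congr pair; apply: shom_eq.
- exact: rst_refl.
- exact: rst_sym.
- exact: rst_trans IH2.
Qed.

Definition lan_sec (A : DSLat) := quot (@lan_rel A).

Definition lan_act (B A : Box) (h : hom B A) : lan_sec A -> lan_sec B :=
  qmap (lan_rel_equiv A) (lan_rel_equiv B) (@lan_pre_rel A B h).

Lemma lan_act_id (A : Box) (x : lan_sec A) : lan_act (idm A) x = x.
Proof.
have [p ->] := quot_cls x; rewrite /lan_act qmap_cls; congr cls.
by case: p => n [g y]; rewrite /lan_pre /=; congr existT; congr pair; apply: shom_eq.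
Qed.

Lemma lan_act_comp (A B C : Box) (f : hom A B) (g : hom B C) (x : lan_sec C) :
  lan_act (comp g f) x = lan_act f (lan_act g x).
Proof.
have [p ->] := quot_cls x; rewrite /lan_act !qmap_cls; congr cls.
by case: p => n [k y]; rewrite /lan_pre /=; congr existT; congr pair; apply: shom_eq.
Qed.

Definition Lan : psh Box := @Psh Box lan_sec lan_act lan_act_id lan_act_comp.
End Lan.

Section LanMor.
Variables (X Y : psh Delta) (f : nat_tr X Y).

Definition lan_fmap (A : DSLat) (p : lanT X A) : lanT Y A :=
  existT _ (projT1 p) ((projT2 p).1, f _ (projT2 p).2).

Lemma lan_fmap_rel A p q : lan_rel p q -> lan_rel (@lan_fmap A p) (lan_fmap q).
Proof.
elim=> {p q} [p q [m [n [g [t [x [-> ->]]]]]] | p | p q _ IH | p q r _ IH1 _ IH2].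
- apply: rst_step; exists m, n, g, t, (f n x); split=> //.
  by rewrite /lan_fmap /= (natural f).
- exact: rst_refl.
- exact: rst_sym.
- exact: rst_trans IH2.
Qed.

Definition lan_mor_cmp (A : Box) : Lan X A -> Lan Y A :=
  qmap (lan_rel_equiv X A) (lan_rel_equiv Y A) (@lan_fmap_rel A).

Lemma lan_mor_natural (A B : Box) (h : hom A B) (x : Lan X B) :
  lan_mor_cmp (act (Lan X) h x) = act (Lan Y) h (lan_mor_cmp x).
Proof.
have [p ->] := quot_cls x; rewrite /= /lan_act /lan_mor_cmp !qmap_cls.
by case: p.
Qed.

Definition LanMor : nat_tr (Lan X) (Lan Y) := NatTr lan_mor_cmp lan_mor_natural.
End LanMor.

(* Main.v *)
Require Import Defs.
From Stdlib Require Import Relations FunctionalExtensionality PropExtensionality ProofIrrelevance Classical Eqdep_dec PeanoNat.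
From mathcomp Require Import all_boot.
From mathcomp Require Import zify.
Import Defs.

Set Implicit Arguments.
Unset Strict Implicit.
Unset Printing Implicit Defensive.



Lemma dhom_eq (m n : nat) (f g : dhom m n) :
  (forall x, sval f x = sval g x) -> f = g.
Proof.
case: f g => f Hf [g Hg] /= H.
have E := functional_extensionality _ _ H; subst g.
by rewrite (proof_irrelevance _ Hf Hg).
Qed.

Section Img.
Variable n : nat.
Variable S : {set 'I_n.+1}.
Hypothesis S0 : (0 < #|S|)%N.

Definition es := enum S.
Definition sz := #|S|.-1.
Definition emb (j : 'I_sz.+1) : 'I_n.+1 := nth ord0 es j.
Definition rnk (u : 'I_n.+1) : 'I_sz.+1 := inord (index u es).

Lemma size_es : size es = sz.+1.
Proof. by rewrite /es -cardE /sz prednK. Qed.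

Lemma es_sorted : sorted (relpre val ltn) es.
Proof.
have -> : es = [seq u <- enum 'I_n.+1 | u \in S] by rewrite /es enumT /enum_mem /=.
apply: sorted_filter; first by move=> a b c; apply: ltn_trans.
rewrite -sorted_map val_enum_ord. exact: iota_ltn_sorted.
Qed.

Lemma emb_in j : emb j \in S.
Proof. by rewrite -mem_enum /emb mem_nth // -/es (size_es) ltn_ord. Qed.

Lemma rnk_emb j : rnk (emb j) = j.
Proof.
have hj : (j < size es)%N by rewrite size_es ltn_ord.
apply: val_inj => /=; rewrite /rnk /emb.
have hu : uniq es by rewrite /es enum_uniq.
rewrite inordK index_uniq //.

Qed.

Lemma emb_rnk u : u \in S -> emb (rnk u) = u.
Proof.
move=> uS; rewrite /emb /rnk inordK ?nth_index ?mem_enum //.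
by rewrite -size_es index_mem mem_enum.
Qed.

Lemma emb_lt (i j : 'I_sz.+1) : (i < j)%N -> (emb i < emb j)%N.
Proof.
move=> h.
have := @sorted_ltn_nth _ (relpre val ltn) _ ord0 es es_sorted i j.
rewrite !inE size_es; apply=> //.
by move=> a b c; apply: ltn_trans.
Qed.

Lemma emb_le (i j : 'I_sz.+1) : (i <= j)%N -> (emb i <= emb j)%N.
Proof.
rewrite leq_eqVlt => /orP [/eqP E | h]; last exact/ltnW/emb_lt.
by have -> : i = j by apply: val_inj.
Qed.

Lemma rnk_mono u v : u \in S -> v \in S -> (u <= v)%N -> (rnk u <= rnk v)%N.
Proof.
move=> uS vS h; rewrite leqNgt; apply/negP => /emb_lt.
by rewrite !emb_rnk // ltnNge h.
Qed.

Definition embD : dhom sz n := exist _ emb emb_le.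
End Img.



Definition surjf (A B : Type) (f : A -> B) := forall b, exists a, f a = b.

Lemma mono_inj_id k (φ : 'I_k.+1 -> 'I_k.+1) :
  (forall i j : 'I_k.+1, (i <= j)%N -> (φ i <= φ j)%N) -> injective φ -> forall i, φ i = i.
Proof.
move=> mono inj.
have slt : forall i j : 'I_k.+1, (i < j)%N -> (φ i < φ j)%N.
  move=> i j h; rewrite ltn_neqAle (mono i j (ltnW h)) andbT.
  apply/negP => /eqP E; have E' : φ i = φ j by apply: val_inj.
  by move: (inj _ _ E') h => ->; rewrite ltnn.
pose f m := nat_of_ord (φ (inord m)).
have fs : forall a b, (a < b)%N -> (b <= k)%N -> (f a < f b)%N.
  move=> a b ab bk; apply: slt; rewrite !inordK //; lia.
have fk : forall a, (f a <= k)%N by move=> a; rewrite -ltnS ltn_ord.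
have up : forall i, (i <= k)%N -> (i <= f i)%N.
  elim=> [|i IH] h //; have := fs i i.+1 (ltnSn i) h; have := IH (ltnW h); lia.
have down : forall d, (d <= k)%N -> (f (k - d) <= k - d)%N.
  elim=> [|d IH] h; first by rewrite subn0.
  have := fs (k - d.+1) (k - d); have := IH (ltnW h); lia.
move=> i; apply: val_inj => /=.
have hi : (i <= k)%N by rewrite -ltnS.
have E : φ i = φ (inord i) by rewrite inord_val.
have := up i hi; have := down (k - i) (leq_subr _ _).
rewrite subKn // /f -E; lia.
Qed.

Section Simp.
Variable X : psh Delta.

Definition degen k (y : X k) := exists k' (π : dhom k k') (z : X k'),
  (k' < k)%N /\ surjf (sval π) /\ y = act X π z.
Definition nondeg k (y : X k) := ~ degen y.

Lemma act_sec j k (σ : dhom j k) (d : dhom k j) (y : X k) :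
  (forall l, sval σ (sval d l) = l) -> act X d (act X σ y) = y.
Proof.
move=> H; rewrite -act_comp.
have -> : @comp Delta _ _ _ σ d = @idm Delta k by apply: dhom_eq.
exact: act_id.
Qed.

Lemma actc (a b c : nat) (f : dhom a b) (g : dhom b c) (x : X c) :
  act X (dcomp g f) x = act X f (act X g x).
Proof. exact (@act_comp Delta X a b c f g x). Qed.

End Simp.

Lemma sec_exists j k (σ : dhom j k) : surjf (sval σ) -> forall i,
  exists d : dhom k j, (forall l, sval σ (sval d l) = l) /\ sval d (sval σ i) = i.
Proof.
move=> su i.
pose d l := if l == sval σ i then i else odflt i [pick p | sval σ p == l].
have dP : forall l, sval σ (d l) = l.
  move=> l; rewrite /d; case: eqP => [-> //|_].
  case: pickP => [p /eqP //|H]; have [p Hp] := su l.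
  by move: (H p); rewrite Hp eqxx.
have dm : forall l l' : 'I_k.+1, (l <= l')%N -> (d l <= d l')%N.
  move=> l l' h; rewrite leqNgt; apply/negP => h2.
  have := proj2_sig σ _ _ (ltnW h2); rewrite !dP => h3.
  have E : l = l' by apply: val_inj; apply/eqP; rewrite eqn_leq h h3.
  by subst l'; move: h2; rewrite ltnn.
exists (exist _ d dm); split => //=.
by rewrite /d eqxx.
Qed.



Section EZ.
Variable X : psh Delta.

Lemma ND k k' (φ : dhom k k') (y : X k) (y' : X k') :
  nondeg y -> y = act X φ y' -> injective (sval φ).
Proof.
move=> ny E.
pose S := (sval φ) @: [set: 'I_k.+1].
have inS : forall i, sval φ i \in S by move=> i; apply: imset_f; rewrite inE.
have S0 : (0 < #|S|)%N by apply/card_gt0P; exists (sval φ ord0).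
have πm : forall i j : 'I_k.+1, (i <= j)%N -> (rnk S (sval φ i) <= rnk S (sval φ j))%N.
  by move=> i j h; apply: rnk_mono => //; apply: (proj2_sig φ).
pose π : dhom k (sz S) := exist _ (fun i => rnk S (sval φ i)) πm.
have Eφ : φ = dcomp (embD S0) π by apply: dhom_eq => i /=; rewrite emb_rnk.
case: (ltnP (sz S) k) => h.
  exfalso; apply: ny; exists (sz S), π, (act X (embD S0) y'); split => //; split.
    move=> l; have /imsetP [i _ Ei] := emb_in S0 l.
    by exists i => /=; rewrite -Ei rnk_emb.
  by rewrite E Eφ actc.
have cS : #|S| = k.+1.
  apply/eqP; rewrite eqn_leq; apply/andP; split.
    by have := leq_imset_card (sval φ) [set: 'I_k.+1]; rewrite cardsT card_ord.
  by move: h; rewrite /sz -ltnS prednK.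
have /imset_injP H : #|S| == #|[set: 'I_k.+1]| by rewrite cS cardsT card_ord.
by move=> a b; apply: H; rewrite inE.
Qed.

Lemma EZ_ex s (w : X s) : exists k (τ : dhom s k) (z : X k),
  surjf (sval τ) /\ nondeg z /\ w = act X τ z.
Proof.
elim/ltn_ind: s w => s IH w.
case: (classic (degen w)) => [[k' [π [z [lt [sπ E]]]]] | nd].
  have [k [τ [z' [sτ [nz E']]]]] := IH k' lt z.
  exists k, (dcomp τ π), z'; split; last split => //.
    move=> l; have [i Ei] := sτ l; have [i' Ei'] := sπ i.
    by exists i' => /=; rewrite Ei' Ei.
  by rewrite actc -E' -E.
exists s, (did s), w; split; last split => //.
  by move=> l; exists l.
by rewrite act_id.
Qed.

Lemma EZ_uniq j k k' (σ : dhom j k) (σ' : dhom j k') (y : X k) (y' : X k') :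
  surjf (sval σ) -> surjf (sval σ') -> nondeg y -> nondeg y' ->
  act X σ y = act X σ' y' ->
  existT (fun k => (dhom j k * X k)%type) k (σ, y) = existT _ k' (σ', y').
Proof.
move=> sσ sσ' ny ny' E.
have key1 : forall d : dhom k j, (forall l, sval σ (sval d l) = l) ->
    y = act X (dcomp σ' d) y'.
  by move=> d hd; rewrite actc -E act_sec.
have key2 : forall d : dhom k' j, (forall l, sval σ' (sval d l) = l) ->
    y' = act X (dcomp σ d) y.
  by move=> d hd; rewrite actc E act_sec.
have [d0 [hd0 _]] := sec_exists sσ ord0.
have [d0' [hd0' _]] := sec_exists sσ' ord0.
have i1 := ND ny (key1 d0 hd0).
have i2 := ND ny' (key2 d0' hd0').
have le1 := leq_card _ i1; have le2 := leq_card _ i2.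
rewrite !card_ord in le1 le2.
have ekk : k = k' by apply/eqP; rewrite eqn_leq -ltnS le1 -ltnS le2.
subst k'.
have idf : forall d : dhom k j, (forall l, sval σ (sval d l) = l) ->
    forall l, sval σ' (sval d l) = l.
  move=> d hd; apply: (@mono_inj_id k (sval (dcomp σ' d))).
    exact: (proj2_sig (dcomp σ' d)).
  exact: (ND ny (key1 d hd)).
have ey : y = y'.
  rewrite (key1 d0 hd0).
  have -> : dcomp σ' d0 = did k by apply: dhom_eq => l; exact: idf.
  by rewrite act_id.
subst y'.
have -> : σ' = σ.
  apply: dhom_eq => i; have [d [hd hi]] := sec_exists sσ i.
  by rewrite -{1}hi idf.
by [].
Qed.
End EZ.



Section NFS.
Variable X : psh Delta.
Variable A : DSLat.

Definition NF (p q : lanT X A) : Prop :=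
  nondeg (projT2 q).2 /\ exists j (e : shom A (tri j)) (δ : dhom j (projT1 p))
    (σ : dhom j (projT1 q)),
   surjf (sval e) /\ surjf (sval σ) /\
   (forall a, sval (projT2 p).1 a = sval δ (sval e a)) /\
   (forall a, sval (projT2 q).1 a = sval σ (sval e a)) /\
   act X δ (projT2 p).2 = act X σ (projT2 q).2.

Lemma rnk_join n (S : {set 'I_n.+1}) (S0 : (0 < #|S|)%N) u v : u \in S -> v \in S ->
  rnk S (joinI u v) = joinI (rnk S u) (rnk S v).
Proof.
move=> uS vS; rewrite /joinI; case: (leqP u v) => h.
  by rewrite (rnk_mono S0 uS vS h).
have h' := rnk_mono S0 vS uS (ltnW h).
case: leqP => // h2.
by apply: val_inj; apply/eqP; rewrite eqn_leq h2 h'.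
Qed.

Lemma a0_ex : exists a : A, True.
Proof. by have /card_gt0P [a _] := inhab A; exists a. Qed.

Lemma NF_ex p : exists q, NF p q.
Proof.
case: p => n [g x].
pose S := (sval g) @: [set: A].
have inS : forall a, sval g a \in S by move=> a; apply: imset_f; rewrite inE.
have [a0 _] := a0_ex.
have S0 : (0 < #|S|)%N by apply/card_gt0P; exists (sval g a0).
have em : forall a b, rnk S (sval g (join a b)) = joinI (rnk S (sval g a)) (rnk S (sval g b)).
  by move=> a b; rewrite (proj2_sig g) /= rnk_join.
pose e : shom A (tri (sz S)) := exist _ (fun a => rnk S (sval g a)) em.
have se : surjf (sval e).
  move=> l; have /imsetP [a _ Ea] := emb_in S0 l.
  by exists a => /=; rewrite -Ea rnk_emb.
have [k [τ [z [sτ [nz Ew]]]]] := EZ_ex (act X (embD S0) x).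
exists (existT _ k (scomp (trimor τ) e, z)); split => //=.
exists (sz S), e, (embD S0), τ; split => //; split => //; split; last by split.
by move=> a; rewrite /embD /= emb_rnk.
Qed.

Lemma NF_core n (g : shom A (tri n)) (x : X n) (S : {set 'I_n.+1}) (S0 : (0 < #|S|)%N)
  (HS : forall u, u \in S -> exists a, sval g a = u) (inS : forall a, sval g a \in S)
  k (τ : dhom (sz S) k) (z : X k) (sτ : surjf (sval τ)) (nz : nondeg z)
  (Ew : act X (embD S0) x = act X τ z)
  j (e : shom A (tri j)) (δ : dhom j n) k' (σ : dhom j k') (y : X k')
  (ny : nondeg y) (se : surjf (sval e)) (sσ : surjf (sval σ))
  (Eg : forall a, sval g a = sval δ (sval e a)) (Ex : act X δ x = act X σ y) :
  existT (fun k => ((A -> 'I_k.+1) * X k)%type) k' (fun a => sval σ (sval e a), y) =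
  existT _ k (fun a => sval τ (rnk S (sval g a)), z).
Proof.
have δS : forall i, sval δ i \in S.
  by move=> i; have [a <-] := se i; rewrite -Eg inS.
have πm : forall i i' : 'I_j.+1, (i <= i')%N -> (rnk S (sval δ i) <= rnk S (sval δ i'))%N.
  by move=> i i' h; apply: rnk_mono => //; apply: (proj2_sig δ).
pose π : dhom j (sz S) := exist _ (fun i => rnk S (sval δ i)) πm.
have sπ : surjf (sval (dcomp τ π)).
  move=> l; have [l' El'] := sτ l.
  have [a Ea] := HS _ (emb_in S0 l').
  by exists (sval e a) => /=; rewrite -Eg Ea rnk_emb.
have Eδ : δ = dcomp (embD S0) π by apply: dhom_eq => i; rewrite /embD /= emb_rnk.
have E2 : act X σ y = act X (dcomp τ π) z by rewrite -Ex Eδ !actc Ew.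
have U := EZ_uniq sσ sπ ny nz E2.
have := congr1 (fun t : {k & (dhom j k * X k)%type} =>
  existT (fun k => ((A -> 'I_k.+1) * X k)%type) (projT1 t)
    (fun a => sval (projT2 t).1 (sval e a), (projT2 t).2)) U.
move=> /= ->; congr existT; congr pair.
by apply: functional_extensionality => a /=; rewrite Eg.
Qed.

Definition forget (q : lanT X A) : {k & ((A -> 'I_k.+1) * X k)%type} :=
  existT _ (projT1 q) (sval (projT2 q).1, (projT2 q).2).

Lemma forget_inj q q' : forget q = forget q' -> q = q'.
Proof.
case: q => k [h y]; case: q' => k' [h' y'] /= E.
have ek := congr1 (@projT1 _ _) E; simpl in ek; subst k'.
have := inj_pair2_eq_dec _ Nat.eq_dec _ _ _ _ E; case=> Eh ->.
by have -> : h = h' by apply: shom_eq => a; rewrite Eh.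
Qed.

Lemma NF_fun p q q' : NF p q -> NF p q' -> q = q'.
Proof.
case: p => n [g x].
move=> [ny [j [e [δ [σ [se [sσ [Eg [Eh Ex]]]]]]]]].
move=> [ny' [j' [e' [δ' [σ' [se' [sσ' [Eg' [Eh' Ex']]]]]]]]].
simpl in *.
pose S := (sval g) @: [set: A].
have inS : forall a, sval g a \in S by move=> a; apply: imset_f; rewrite inE.
have HS : forall u, u \in S -> exists a, sval g a = u.
  by move=> u /imsetP [a _ ->]; exists a.
have [a0 _] := a0_ex.
have S0 : (0 < #|S|)%N by apply/card_gt0P; exists (sval g a0).
have [k [τ [z [sτ [nz Ew]]]]] := EZ_ex (act X (embD S0) x).
have U1 := NF_core HS inS sτ nz Ew ny se sσ Eg Ex.
have U2 := NF_core HS inS sτ nz Ew ny' se' sσ' Eg' Ex'.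
apply: forget_inj.
have F1 : forget q = existT _ (projT1 q) (fun a => sval σ (sval e a), (projT2 q).2).
  by rewrite /forget; congr existT; congr pair; apply: functional_extensionality.
have F2 : forget q' = existT _ (projT1 q') (fun a => sval σ' (sval e' a), (projT2 q').2).
  by rewrite /forget; congr existT; congr pair; apply: functional_extensionality.
by rewrite F1 F2 U1 U2.
Qed.

End NFS.



Section NFS2.
Variable X : psh Delta.
Variable A : DSLat.

Lemma NF_step (p p' q : lanT X A) : lan_step p p' -> NF p' q -> NF p q.
Proof.
move=> [m [n [g [t [x [-> ->]]]]]] [ny [j [e [δ [σ [se [sσ [Eg [Eh Ex]]]]]]]]].
simpl in *; split => //.
exists j, e, (dcomp t δ), σ; split => //; split => //; split.
  by move=> a /=; rewrite Eg.
by split => //=; rewrite actc.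
Qed.

Lemma NF_inv (p p' : lanT X A) : lan_rel p p' -> forall q, NF p q <-> NF p' q.
Proof.
elim=> {p p'} [p p' st | p | p p' _ IH | p p' p'' _ IH1 _ IH2] q.
- split; last exact: NF_step.
  move=> H; have [q' Hq'] := NF_ex p'.
  by have := NF_fun H (NF_step st Hq') => ->.
- by [].
- by rewrite IH.
- by rewrite IH1 IH2.
Qed.

Lemma NF_rel (p q : lanT X A) : NF p q -> lan_rel p q.
Proof.
case: p => n [g x]; case: q => k [h y].
move=> [ny [j [e [δ [σ [se [sσ [Eg [Eh Ex]]]]]]]]]; simpl in *.
have Eg' : g = scomp (trimor δ) e by apply: shom_eq.
have Eh' : h = scomp (trimor σ) e by apply: shom_eq.
subst g h.
apply: (rst_trans _ _ _ (existT _ j (e, act X δ x))).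
  by apply: rst_step; exists j, n, e, δ, x.
rewrite Ex; apply: rst_sym; apply: rst_step; exists j, k, e, σ, y.
by [].
Qed.
End NFS2.

Section Map.
Variables (X Y : psh Delta) (f : nat_tr X Y).
Hypothesis finj : forall n, injective (f n).

Lemma NF_map A (p q : lanT X A) : NF p q -> NF (lan_fmap f p) (lan_fmap f q).
Proof.
case: p => n [g x]; case: q => k [h y].
move=> [ny [j [e [δ [σ [se [sσ [Eg [Eh Ex]]]]]]]]]; simpl in *.
split.
  move=> [k' [π [z [lt [sπ Ez]]]]]; simpl in *.
  have [d [hd _]] := sec_exists sπ ord0.
  have Ez2 : z = f _ (act X d y) by rewrite (natural f) Ez act_sec.
  apply: ny; exists k', π, (act X d y); split => //; split => //.
  apply: finj; by rewrite (natural f) -Ez2.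
exists j, e, δ, σ; split => //; split => //; split => //; split => //=.
by rewrite -!(natural f) Ex.
Qed.

Lemma fmap_inj A (u v : lanT X A) : lan_fmap f u = lan_fmap f v -> u = v.
Proof.
case: u => n [g x]; case: v => m [g' x']; rewrite /lan_fmap /= => E.
have em := congr1 (@projT1 _ _) E; simpl in em; subst m.
have := inj_pair2_eq_dec _ Nat.eq_dec _ _ _ _ E; case=> -> /finj ->.
by [].
Qed.

Lemma cls_eq A (p q : lanT X A) : lan_rel p q -> cls (@lan_rel X A) p = cls (@lan_rel X A) q.
Proof.
move=> H; apply: eq_sig_hprop => [P|]; first by move=> *; apply: proof_irrelevance.
simpl; apply: functional_extensionality => r; apply: propositional_extensionality.
split=> H'.
  exact: (rst_trans _ _ _ _ _ (rst_sym _ _ _ _ H) H').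
exact: (rst_trans _ _ _ _ _ H H').
Qed.

Lemma lan_inj A (P Q : Lan X A) : lan_mor_cmp f P = lan_mor_cmp f Q -> P = Q.
Proof.
have [p ->] := quot_cls P; have [q ->] := quot_cls Q.
rewrite /lan_mor_cmp !qmap_cls => E.
have R : lan_rel (lan_fmap f p) (lan_fmap f q).
  have := congr1 (@sval _ _) E; simpl => E'.
  rewrite E'; exact: rst_refl.
have [qp Hp] := NF_ex p; have [qq Hq] := NF_ex q.
have Hp' := NF_map Hp; have Hq' := NF_map Hq.
have Hp'' : NF (lan_fmap f q) (lan_fmap f qp) by rewrite -(NF_inv R).
have eq := fmap_inj (NF_fun Hp'' Hq'); subst qq.
apply: cls_eq.
exact: (rst_trans _ _ _ _ _ (NF_rel Hp) (rst_sym _ _ _ _ (NF_rel Hq))).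
Qed.
End Map.

Definition yon (n : nat) : psh Delta.
refine (@Psh Delta (fun a => dhom a n) (fun a b (t : hom a b) (z : dhom b n) => dcomp z t) _ _).
- by move=> a z; apply: dhom_eq.
- by move=> a b c t u z; apply: dhom_eq.
Defined.

Definition yx (X : psh Delta) (n : nat) (x : X n) : nat_tr (yon n) X :=
  @NatTr Delta (yon n) X (fun (a : nat) (z : dhom a n) => act X z x)
        (fun (a b : nat) (t : dhom a b) (z : dhom b n) => @act_comp Delta X a b n t z x).

Theorem mainTheorem9 (X Y : psh Delta) (f : nat_tr X Y) :
  is_mono f -> is_mono (LanMor f).
Proof.
move=> mono.
have finj : forall n, injective (f n).
  move=> n x1 x2 E.
  have := mono (yon n) (yx x1) (yx x2) _ n (did n).
  rewrite /= !act_id; apply.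
  by move=> a z /=; rewrite !(natural f) E.
move=> Z g h H a z.
apply: (lan_inj finj).
exact: H.
Qed.
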